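(* Let $B$ be a ring in which every left regular element is regular. Let $S\subseteq S_0(B)$ be a multiplicative subset of $B$ such that $S^{-1}B$ exists. Then: (i) $Q_l(B)$ exists if and only if $Q_l(S^{-1}B)$ exists, and in that case $Q_l(B)\cong Q_l(S^{-1}B)$; (ii) $B$ is semiprime left Goldie if and only if $S^{-1}B$ is semiprime left Goldie. The right-side version also holds, for a ring $B$ in which every right regular element is regular, with $BS^{-1}$ and $Q_r$ in place of $S^{-1}B$ and $Q_l$.
   Context: Rings are associative with identity. $S_0(B)$ is the set of regular elements (non-zero-divisors) of $B$. An element $x$ is left regular if $rx=0$ implies $r=0$, and right regular if $xr=0$ implies $r=0$. A multiplicative subset $S$ satisfies $1\in S$, $0\notin S$, and is closed under products. $S^{-1}B$ (respectively $BS^{-1}$) is the left (respectively right) ring of fractions of $B$ with respect to $S$. $Q_l(C)$ (respectively $Q_r(C)$) denotes the left (respectively right) total ring of fractions of a ring $C$, i.e. the classical left (right) ring of fractions of $C$ with respect to $S_0(C)$, when it exists. *)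

(* Defs.v *)
From HB Require Import structures.
From mathcomp Require Import all_boot all_order all_algebra.
Set Implicit Arguments. Unset Strict Implicit. Unset Printing Implicit Defensive.
Import GRing.Theory.
Local Open Scope ring_scope.

Section Defs.
Variable B : nzRingType.

Definition left_regular (x : B) : Prop := forall r : B, r * x = 0 -> r = 0.
Definition right_regular (x : B) : Prop := forall r : B, x * r = 0 -> r = 0.
Definition regular (x : B) : Prop := left_regular x /\ right_regular x.

Definition multiplicative (S : B -> Prop) : Prop :=
  [/\ S 1, ~ S 0 & forall a b, S a -> S b -> S (a * b)].

Definition invertible (x : B) : Prop := exists y : B, x * y = 1 /\ y * x = 1.

Definition additive_subgroup (I : B -> Prop) : Prop :=
  I 0 /\ forall x y, I x -> I y -> I (x - y).
Definition left_ideal (I : B -> Prop) : Prop :=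
  additive_subgroup I /\ forall r x, I x -> I (r * x).
Definition right_ideal (I : B -> Prop) : Prop :=
  additive_subgroup I /\ forall r x, I x -> I (x * r).
Definition two_sided_ideal (I : B -> Prop) : Prop :=
  additive_subgroup I /\ forall r x, I x -> I (r * x) /\ I (x * r).

Definition semiprime : Prop :=
  forall I : B -> Prop, two_sided_ideal I ->
    (forall x y, I x -> I y -> x * y = 0) -> forall x, I x -> x = 0.

Definition lann (X : B -> Prop) : B -> Prop := fun r => forall x, X x -> r * x = 0.
Definition rann (X : B -> Prop) : B -> Prop := fun r => forall x, X x -> x * r = 0.

Definition acc_lann : Prop :=
  forall X : nat -> B -> Prop,
    (forall n r, lann (X n) r -> lann (X n.+1) r) ->
    exists N, forall n, (N <= n)%N -> forall r, lann (X n) r <-> lann (X N) r.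
Definition acc_rann : Prop :=
  forall X : nat -> B -> Prop,
    (forall n r, rann (X n) r -> rann (X n.+1) r) ->
    exists N, forall n, (N <= n)%N -> forall r, rann (X n) r <-> rann (X N) r.

Definition independent (I : nat -> B -> Prop) : Prop :=
  forall (n : nat) (x : nat -> B), (forall i, (i < n)%N -> I i (x i)) ->
    \sum_(i < n) x i = 0 -> forall i, (i < n)%N -> x i = 0.

Definition finite_left_udim : Prop :=
  ~ exists I : nat -> B -> Prop,
      [/\ forall n, left_ideal (I n), forall n, exists2 x, I n x & x <> 0
        & independent I].
Definition finite_right_udim : Prop :=
  ~ exists I : nat -> B -> Prop,
      [/\ forall n, right_ideal (I n), forall n, exists2 x, I n x & x <> 0
        & independent I].

Definition left_goldie : Prop := acc_lann /\ finite_left_udim.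
Definition right_goldie : Prop := acc_rann /\ finite_right_udim.
Definition semiprime_left_goldie : Prop := semiprime /\ left_goldie.
Definition semiprime_right_goldie : Prop := semiprime /\ right_goldie.
End Defs.

(* (A, f) is a left ring of fractions of B w.r.t. S:
   f(s) invertible for s in S, every q is f(s)^{-1} f(b) (i.e. f(s) q = f(b)),
   and ker f = { b | s b = 0 for some s in S }. *)
Definition is_left_fractions (B A : nzRingType) (S : B -> Prop)
    (f : {rmorphism B -> A}) : Prop :=
  [/\ forall s, S s -> invertible (f s),
      forall q : A, exists s b, S s /\ f s * q = f b
    & forall b, f b = 0 <-> exists s, S s /\ s * b = 0].

(* right ring of fractions: q = f(b) f(s)^{-1}, kernel { b | b s = 0 } *)
Definition is_right_fractions (B A : nzRingType) (S : B -> Prop)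
    (f : {rmorphism B -> A}) : Prop :=
  [/\ forall s, S s -> invertible (f s),
      forall q : A, exists s b, S s /\ q * f s = f b
    & forall b, f b = 0 <-> exists s, S s /\ b * s = 0].

Definition is_Ql (B A : nzRingType) (f : {rmorphism B -> A}) : Prop :=
  is_left_fractions (@regular B) f.
Definition is_Qr (B A : nzRingType) (f : {rmorphism B -> A}) : Prop :=
  is_right_fractions (@regular B) f.

Definition Ql_exists (B : nzRingType) : Prop :=
  exists (A : nzRingType) (f : {rmorphism B -> A}), is_Ql f.
Definition Qr_exists (B : nzRingType) : Prop :=
  exists (A : nzRingType) (f : {rmorphism B -> A}), is_Qr f.

Definition ring_isomorphic (A1 A2 : nzRingType) : Prop :=
  exists h : {rmorphism A1 -> A2}, bijective h.

(* Main.v *)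
Require Import Defs.
From HB Require Import structures.
From mathcomp Require Import all_boot all_order all_algebra.
From Stdlib Require Import ClassicalEpsilon Classical.
Set Implicit Arguments. Unset Strict Implicit. Unset Printing Implicit Defensive.
Local Open Scope ring_scope.

Module Helpers.
Import GRing.Theory.


Definition mk_rmorph (R1 R2 : nzRingType) (h : R1 -> R2)
  (Hadd : forall x y, h (x - y) = h x - h y)
  (Hmul : forall x y, h (x * y) = h x * h y) (H1 : h 1 = 1) : {rmorphism R1 -> R2} :=
  HB.pack h (GRing.isZmodMorphism.Build R1 R2 h Hadd)
            (GRing.isMonoidMorphism.Build R1 R2 h (H1, Hmul)).

Lemma mk_rmorphE R1 R2 h a b c x : @mk_rmorph R1 R2 h a b c x = h x.
Proof. by []. Qed.

Section Basics.
Variable R : nzRingType.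
Implicit Types x y a b : R.

Lemma inv_cancel x a b : invertible x -> x * a = x * b -> a = b.
Proof. by case=> y [_ yx] e; rewrite -[a]mul1r -[b]mul1r -yx -!mulrA e. Qed.

Lemma inv_cancel0 x a : invertible x -> x * a = 0 -> a = 0.
Proof. by move=> ix e; apply: (inv_cancel ix); rewrite mulr0. Qed.

Lemma inv_mul x y : invertible x -> invertible y -> invertible (x * y).
Proof.
case=> u [xu ux] [v [yv vy]]; exists (v * u); split.
  by rewrite mulrA -(mulrA x) yv mulr1.
by rewrite mulrA -(mulrA v) ux mulr1.
Qed.

Lemma inv_reg x : invertible x -> regular x.
Proof.
move=> ix; split=> r e.
  case: ix => y [xy _]; by rewrite -[r]mulr1 -xy mulrA e mul0r.
exact: inv_cancel0 ix e.
Qed.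

Lemma reg_mul x y : regular x -> regular y -> regular (x * y).
Proof.
case=> lx rx [ly ry]; split=> r e.
  by apply: lx; apply: ly; rewrite -mulrA.
by apply: ry; apply: rx; rewrite mulrA.
Qed.

Lemma regular_mult : Defs.multiplicative (@regular R).
Proof.
split.
- by split=> r; rewrite ?mulr1 ?mul1r.
- case=> l _; have := l 1; rewrite mulr0 => /(_ erefl) /eqP; by rewrite oner_eq0.
- exact: reg_mul.
Qed.

Lemma inv1 : invertible (1 : R).
Proof. by exists 1; rewrite mulr1. Qed.

End Basics.

Section Universal.
Variables (B A C : nzRingType) (S : B -> Prop) (f : {rmorphism B -> A}).
Hypothesis HS : Defs.multiplicative S.
Hypothesis Hf : is_left_fractions S f.
Variable g : {rmorphism B -> C}.
Hypothesis Hg : forall s, S s -> invertible (g s).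

Let S1 : S 1. Proof. by case: HS. Qed.
Let SM a b : S a -> S b -> S (a * b). Proof. by case: HS => _ _; apply. Qed.
Let fS s : S s -> invertible (f s). Proof. by case: Hf => h _ _; apply: h. Qed.
Let frep (q : A) : exists s b, S s /\ f s * q = f b. Proof. by case: Hf => _ h _. Qed.
Let fker b : f b = 0 -> exists s, S s /\ s * b = 0. Proof. by case: Hf => _ _ h; move=> e; apply/(h b). Qed.

Lemma ore_gen s x : S s -> exists t d, S t /\ f t * f x = f d * f s.
Proof.
move=> Ss; case: (fS Ss) => v [sv vs].
case: (frep (f x * v)) => t [d [St e]]; exists t, d; split=> //.
by rewrite -e -!mulrA vs mulr1.
Qed.

Lemma g_transfer x y : f x = f y -> g x = g y.
Proof.
move=> e; have /fker [u [Su ue]] : f (x - y) = 0 by rewrite rmorphB e subrr.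
apply/eqP; rewrite -subr_eq0; apply/eqP.
by apply: (inv_cancel0 (Hg Su)); rewrite -rmorphB -rmorphM ue rmorph0.
Qed.

Definition hfun (q : A) : C :=
  let sb := constructive_indefinite_description _ (frep q) in
  let b := constructive_indefinite_description _ (proj2_sig sb) in
  let w := constructive_indefinite_description _
      (Hg (proj1 (proj2_sig b))) in
  proj1_sig w * g (proj1_sig b).

Lemma hfun_spec0 q : exists s b, [/\ S s, f s * q = f b & g s * hfun q = g b].
Proof.
rewrite /hfun.
case: (constructive_indefinite_description _ (frep q)) => s /= P.
case: (constructive_indefinite_description _ P) => b /= [Ss e].
case: (constructive_indefinite_description _ _) => w /= [sw ws].
by exists s, b; split=> //; rewrite mulrA sw mul1r.
Qed.


Lemma hfun_spec q s b : S s -> f s * q = f b -> g s * hfun q = g b.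
Proof.
move=> Ss e; case: (hfun_spec0 q) => s0 [b0 [Ss0 e0 g0]].
case: (ore_gen s0 Ss) => t [d [St etd]].
have e1 : f (t * s0) = f (d * s) by rewrite !rmorphM.
have e2 : f (t * b0) = f (d * b).
  by rewrite !rmorphM -e0 -e mulrA etd mulrA.
have g1 := g_transfer e1; have g2 := g_transfer e2.
have ig : invertible (g d).
  have ids : invertible (g (d * s)) by rewrite -g1; apply: Hg; apply: SM.
  case: (Hg Ss) => v [sv vs].
  have -> : g d = g (d * s) * v by rewrite rmorphM -mulrA sv mulr1.
  apply: inv_mul ids _; by exists (g s).
apply: (inv_cancel ig).
by rewrite mulrA -rmorphM -g1 rmorphM -mulrA g0 -rmorphM g2 rmorphM.
Qed.

Section Spec.
Variable hfun : A -> C.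
Hypothesis hfun_spec : forall q s b, S s -> f s * q = f b -> g s * hfun q = g b.

Lemma hfun_f b : hfun (f b) = g b.
Proof.
have := @hfun_spec (f b) 1 b S1; rewrite rmorph1 mul1r rmorph1 mul1r; exact.
Qed.

Lemma hfun_add : forall x y, hfun (x - y) = hfun x - hfun y.
Proof.
move=> q1 q2.
case: (frep q1) => s1 [b1 [S1' e1]]; case: (frep q2) => s2 [b2 [S2' e2]].
case: (ore_gen s1 S2') => t [d [St etd]].
have Sts : S (t * s1) by apply: SM.
apply: (inv_cancel (Hg Sts)).
have -> : g (t * s1) * hfun (q1 - q2) = g (t * b1 - d * b2).
  apply: hfun_spec => //.
  by rewrite rmorphM mulrBr -mulrA e1 rmorphB !rmorphM etd -mulrA e2.
have gts : g (t * s1) = g (d * s2) by apply: g_transfer; rewrite !rmorphM.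
rewrite mulrBr {2}gts !rmorphM -!mulrA (hfun_spec S1' e1) (hfun_spec S2' e2).
by rewrite rmorphB !rmorphM.
Qed.

Lemma hfun_mul : forall x y, hfun (x * y) = hfun x * hfun y.
Proof.
move=> q1 q2.
case: (frep q1) => s1 [b1 [S1' e1]]; case: (frep q2) => s2 [b2 [S2' e2]].
case: (ore_gen b1 S2') => t [d [St etd]].
have Sts : S (t * s1) by apply: SM.
apply: (inv_cancel (Hg Sts)).
have -> : g (t * s1) * hfun (q1 * q2) = g (d * b2).
  apply: hfun_spec => //.
  by rewrite rmorphM -mulrA (mulrA (f s1)) e1 mulrA etd -mulrA e2 rmorphM.
have gts : g (t * b1) = g (d * s2) by apply: g_transfer; rewrite !rmorphM.
symmetry.
rewrite (rmorphM g t s1) -(mulrA (g t)) (mulrA (g s1)) (hfun_spec S1' e1).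
rewrite mulrA -(rmorphM g t b1) gts (rmorphM g d s2) -mulrA (hfun_spec S2' e2).
by rewrite -rmorphM.
Qed.

Lemma hfun_1 : hfun 1 = 1.
Proof. by rewrite -(rmorph1 f) hfun_f rmorph1. Qed.
End Spec.

Definition hmorph : {rmorphism A -> C} :=
  mk_rmorph (hfun_add hfun_spec) (hfun_mul hfun_spec) (hfun_1 hfun_spec).

Lemma universal : exists h : {rmorphism A -> C},
  (forall b, h (f b) = g b) /\
  (forall q s b, S s -> f s * q = f b -> g s * h q = g b).
Proof. exists hmorph; split; [exact: (hfun_f hfun_spec) | exact: hfun_spec]. Qed.

End Universal.


Definition comp_rm (B A Q : nzRingType) (f : {rmorphism B -> A}) (g : {rmorphism A -> Q})
  : {rmorphism B -> Q}.
refine (@mk_rmorph B Q (fun x => g (f x)) _ _ _).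
- by move=> x y; rewrite !rmorphB.
- by move=> x y; rewrite !rmorphM.
- by rewrite !rmorph1.
Defined.

Lemma comp_rmE B A Q f g x : @comp_rm B A Q f g x = g (f x).
Proof. by []. Qed.

Lemma Ql_uniq (B Q1 Q2 : nzRingType) (g1 : {rmorphism B -> Q1}) (g2 : {rmorphism B -> Q2}) :
  is_Ql g1 -> is_Ql g2 -> ring_isomorphic Q1 Q2.
Proof.
move=> H1 H2.
have inv1 s : regular s -> invertible (g1 s) by case: H1 => h _ _; apply: h.
have inv2 s : regular s -> invertible (g2 s) by case: H2 => h _ _; apply: h.
have [h [hf hs]] := universal (@regular_mult B) H1 inv2.
have [k [kf ks]] := universal (@regular_mult B) H2 inv1.
exists h; exists k.
- move=> q; case: H1 => _ rep _; case: (rep q) => c [b [rc e]].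
  apply: (inv_cancel (inv1 _ rc)); rewrite e -kf -(kf b) -(hs _ _ _ rc e).
  by rewrite rmorphM.
- move=> q; case: H2 => _ rep _; case: (rep q) => c [b [rc e]].
  apply: (inv_cancel (inv2 _ rc)); rewrite e -hf -(hf b) -(ks _ _ _ rc e).
  by rewrite rmorphM.
Qed.

Section LeftFrac.
Variables (B A : nzRingType) (S : B -> Prop) (f : {rmorphism B -> A}).
Hypothesis HS : Defs.multiplicative S.
Hypothesis Sreg : forall s, S s -> regular s.
Hypothesis Hf : is_left_fractions S f.

Lemma lf_S1 : S 1. Proof. by case: HS. Qed.
Lemma lf_SM a b : S a -> S b -> S (a * b). Proof. by case: HS => _ _; apply. Qed.
Lemma lf_fS s : S s -> invertible (f s). Proof. by case: Hf => h _ _; apply: h. Qed.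
Lemma lf_rep (q : A) : exists s b, S s /\ f s * q = f b. Proof. by case: Hf => _ h _. Qed.

Lemma f_inj0 x : f x = 0 -> x = 0.
Proof.
move=> e; case: Hf => _ _ h; case/(h x): e => s [Ss e].
by case: (Sreg Ss) => _ r; apply: r.
Qed.

Lemma f_inj x y : f x = f y -> x = y.
Proof.
by move=> e; apply/eqP; rewrite -subr_eq0; apply/eqP/f_inj0; rewrite rmorphB e subrr.
Qed.

Lemma ore s x : S s -> exists t d, S t /\ t * x = d * s.
Proof.
move=> Ss; case: (ore_gen Hf x Ss) => t [d [St e]].
by exists t, d; split=> //; apply: f_inj; rewrite !rmorphM.
Qed.

Lemma regB b : regular (f b) -> regular b.
Proof.
case=> l r; split=> x e; apply: f_inj0.
  by apply: l; rewrite -rmorphM e rmorph0.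
by apply: r; rewrite -rmorphM e rmorph0.
Qed.

Hypothesis LR : forall x : B, left_regular x -> regular x.

Lemma regF c : regular c -> regular (f c).
Proof.
move=> [lc rc]; split=> q e; case: (lf_rep q) => s [b [Ss eb]].
- have : b * c = 0.
    by apply: f_inj0; rewrite rmorphM -eb -mulrA e mulr0.
  move/lc => b0; apply: (inv_cancel0 (lf_fS Ss)); by rewrite eb b0 rmorph0.
- case: (ore_gen Hf c Ss) => t [d [St etd]].
  have db : d * b = 0.
    apply: f_inj0; by rewrite rmorphM -eb mulrA -etd -mulrA e mulr0.
  have tcds : t * c = d * s by apply: f_inj; rewrite !rmorphM.
  have ld : left_regular d.
    move=> r rd; have : r * t * c = 0 by rewrite -mulrA tcds mulrA rd mul0r.
    move/lc; case: (Sreg St) => lt _; exact: lt.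
  have [_ rd] := LR ld; have b0 := rd _ db.
  apply: (inv_cancel0 (lf_fS Ss)); by rewrite eb b0 rmorph0.
Qed.

Lemma Ql_comp (Q : nzRingType) (g : {rmorphism A -> Q}) :
  is_Ql g -> is_Ql (comp_rm f g).
Proof.
case=> gi grep gker; split.
- by move=> c rc; rewrite comp_rmE; apply: gi; apply: regF.
- move=> q; case: (grep q) => a1 [a2 [ra1 e]].
  case: (lf_rep a1) => s1 [b1 [S1 e1]]; case: (lf_rep a2) => s2 [b2 [S2 e2]].
  case: (ore s1 S2) => t [d [St etd]].
  exists (t * b1), (d * b2); split.
    apply: reg_mul; first exact: Sreg.
    apply: regB; rewrite -e1; apply: reg_mul => //; apply: inv_reg; exact: lf_fS.
  rewrite !comp_rmE !rmorphM -e1 -e2 !rmorphM -!mulrA e !mulrA -!rmorphM.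
  by rewrite etd.
- move=> b; rewrite comp_rmE; split.
    case/gker => a [[_ ra] e]; exists 1; split; first by case: (regular_mult B).
    by rewrite mul1r; apply: f_inj0; apply: ra.
  case=> c [[_ rc] e]; by rewrite (rc _ e) !rmorph0.
Qed.

Lemma Ql_back (Q : nzRingType) (g : {rmorphism B -> Q}) :
  is_Ql g -> exists h : {rmorphism A -> Q}, is_Ql h.
Proof.
move=> Hg; case: (Hg) => gi grep gker.
have inv s : S s -> invertible (g s) by move=> Ss; apply: gi; apply: Sreg.
have [h [hf hs]] := universal HS Hf inv.
exists h; split.
- move=> a ra; case: (lf_rep a) => s [b [Ss e]].
  have rb : regular b.
    apply: regB; rewrite -e; apply: reg_mul => //; apply: inv_reg; exact: lf_fS.
  have := hs _ _ _ Ss e; case: (inv _ Ss) => v [sv vs] e2.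
  have -> : h a = v * g b by rewrite -e2 mulrA vs mul1r.
  apply: inv_mul; [by exists (g s) | exact: gi].
- move=> q; case: (grep q) => c [b [rc e]].
  by exists (f c), (f b); split; [exact: regF | rewrite !hf].
- move=> a; split.
    move=> ha; case: (lf_rep a) => s [b [Ss e]].
    have := hs _ _ _ Ss e; rewrite ha mulr0 => /esym /gker [c [[_ rc] cb]].
    have b0 := rc _ cb.
    have a0 : a = 0 by apply: (inv_cancel0 (lf_fS Ss)); rewrite e b0 rmorph0.
    exists 1; split; first by case: (regular_mult A).
    by rewrite a0 mulr0.
  case=> a' [[_ ra] e]; by rewrite (ra _ e) rmorph0.
Qed.

Lemma part_i :
  (Ql_exists B <-> Ql_exists A) /\
  (forall (Q1 Q2 : nzRingType) (g1 : {rmorphism B -> Q1}) (g2 : {rmorphism A -> Q2}),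
      is_Ql g1 -> is_Ql g2 -> ring_isomorphic Q1 Q2).
Proof.
split.
  split.
    case=> Q [g Hg]; case: (Ql_back Hg) => h Hh; by exists Q, h.
  case=> Q [g Hg]; exists Q, (comp_rm f g); exact: Ql_comp.
move=> Q1 Q2 g1 g2 H1 H2; exact: (Ql_uniq H1 (Ql_comp H2)).
Qed.

End LeftFrac.


Section Goldie.
Variable R : nzRingType.
Implicit Types x y a b r : R.

Lemma semiprime_elem :
  semiprime R <-> (forall x, (forall a, x * a * x = 0) -> x = 0).
Proof.
split.
  move=> sp x hx.
  pose K y := forall a, y * a * x = 0.
  pose K2 z := forall y, K y -> y * z = 0.
  pose I y := K y /\ K2 y.
  have KL r y : K y -> K (r * y).
    by move=> Ky a; have := Ky a; rewrite -!mulrA => ->; rewrite mulr0.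
  have KR r y : K y -> K (y * r).
    by move=> Ky a; have := Ky (r * a); rewrite -!mulrA => ->.
  apply: (sp I); last first.
  - split=> // y Ky; by have := Ky 1; rewrite mulr1.
  - by move=> y z [Ky _] [_ K2z]; apply: K2z.
  split.
    split.
      by split=> [a|y _]; rewrite ?mul0r ?mulr0.
    move=> y z [Ky K2y] [Kz K2z]; split.
      by move=> a; rewrite mulrBl mulrBl Ky Kz subrr.
    by move=> u Ku; rewrite mulrBr K2y ?K2z // subrr.
  move=> r y [Ky K2y]; split; split.
  - exact: KL.
  - by move=> u Ku; rewrite mulrA K2y //; apply: KR.
  - exact: KR.
  - by move=> u Ku; rewrite mulrA K2y // mul0r.
move=> h I [[I0 IB] IM] I2 x Ix; apply: h => a.
by rewrite -mulrA I2 //; case: (IM a x Ix).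
Qed.

Lemma rann_lann_rann (X : R -> Prop) r : rann (lann (rann X)) r <-> rann X r.
Proof.
split.
  by move=> h x Xx; apply: h => y; apply.
by move=> h y; apply.
Qed.

Lemma dcc_rann : acc_lann R -> forall X : nat -> R -> Prop,
  (forall n r, rann (X n.+1) r -> rann (X n) r) ->
  exists k, forall r, rann (X k) r -> rann (X k.+1) r.
Proof.
move=> acc X ch.
have [N HN] := acc (fun n => rann (X n)) (fun n r h y Y => h y (ch n y Y)).
exists N => r hr; apply/rann_lann_rann => y hy.
have := (HN N.+1 (leqnSn N) y).1 hy; exact: (fun h => h r hr).
Qed.

Definition essential (E : R -> Prop) :=
  forall K, left_ideal K -> (exists2 k, K k & k <> 0) ->
    exists k, [/\ K k, E k & k <> 0].

Lemma ess_super (E E' : R -> Prop) :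
  essential E -> (forall x, E x -> E' x) -> essential E'.
Proof.
move=> eE sub K lK nz; case: (eE K lK nz) => k [Kk Ek k0].
by exists k; split=> //; apply: sub.
Qed.

Lemma ess_colon (E : R -> Prop) a :
  E 0 -> essential E -> essential (fun c => E (c * a)).
Proof.
move=> E0 eE K [[K0 KB] KM] [k0 Kk0 k00].
case: (classic (exists2 k, K k & k * a <> 0)) => [[k Kk ka]|].
  pose Ka y := exists2 k, K k & y = k * a.
  have lKa : left_ideal Ka.
    split; first split.
    - by exists 0; rewrite ?mul0r.
    - move=> _ _ [k1 K1 ->] [k2 K2 ->]; exists (k1 - k2); first exact: KB.
      by rewrite mulrBl.
    - move=> r _ [k1 K1 ->]; exists (r * k1); first exact: KM.
      by rewrite mulrA.
  case: (eE Ka lKa) => [|y [[k1 K1 ->] Ey y0]].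
    by exists (k * a) => //; exists k.
  exists k1; split=> //; by move=> e; apply: y0; rewrite e mul0r.
move=> nk; exists k0; split=> //.
have -> : k0 * a = 0.
  by apply: NNPP => ne; apply: nk; exists k0.
exact: E0.
Qed.

Lemma acc_mono (acc : acc_lann R) : True. Proof. by []. Qed.

Lemma nil_lemma : semiprime R -> acc_lann R ->
  forall T : R -> Prop, (forall x r, T x -> T (x * r)) ->
  (forall x, T x -> exists n, x ^+ n = 0) -> forall x, T x -> x = 0.
Proof.
move=> sp acc T TR Tnil x0 Tx0; apply: NNPP => x00.
pose ll (a : R) r := r * a = 0.
have [a [Ta a0 amax]] : exists a, [/\ T a, a <> 0 &
    forall a', T a' -> a' <> 0 -> (forall r, ll a r -> ll a' r) ->
      forall r, ll a' r -> ll a r].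
  apply: NNPP => nex.
  have step : forall a, exists a', (T a /\ a <> 0) ->
      [/\ T a', a' <> 0, (forall r, ll a r -> ll a' r) & ~ (forall r, ll a' r -> ll a r)].
    move=> a; case: (classic (T a /\ a <> 0)) => [[Ta a0]|nh]; last first.
      by exists 0.
    apply: NNPP => nn; apply: nex; exists a; split=> // a' Ta' a'0 sub.
    apply: NNPP => ns; apply: nn; exists a' => _; by split.
  pose g a := proj1_sig (constructive_indefinite_description _ (step a)).
  have gP a : T a /\ a <> 0 ->
      [/\ T (g a), g a <> 0, (forall r, ll a r -> ll (g a) r) &
        ~ (forall r, ll (g a) r -> ll a r)].
    by rewrite /g; case: (constructive_indefinite_description _ _) => /= b; apply.
  pose sq n := iter n g x0.
  have sqP n : T (sq n) /\ sq n <> 0.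
    elim: n => [|n [T1 T2]] //=; by case: (gP _ (conj T1 T2)).
  have ch : forall n r, lann (fun y => y = sq n) r -> lann (fun y => y = sq n.+1) r.
    move=> n r h y ->; have [T1 T2] := sqP n.
    case: (gP _ (conj T1 T2)) => _ _ sub _; apply: sub; exact: h.
  have [N HN] := acc _ ch.
  have [T1 T2] := sqP N; case: (gP _ (conj T1 T2)) => _ _ _ nsub; apply: nsub => r hr.
  have := (HN N.+1 (leqnSn N) r).1 (fun y e => etrans (congr1 _ e) hr).
  by apply.
have ara r : a * r * a = 0.
  suff P n : (a * r) ^+ n = 0 -> a * r * a = 0.
    by case: (Tnil _ (TR a r Ta)) => n; apply: P.
  elim: n => [|n IH h].
    by rewrite expr0 => /eqP; rewrite oner_eq0.
  case: (classic ((a * r) ^+ n = 0)) => [/IH //|un].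
  case: n IH h un => [|m] _ h un.
    by move: h; rewrite expr1 => ->; rewrite mul0r.
  have Tu : T ((a * r) ^+ m.+1) by rewrite exprS -mulrA; apply: TR.
  have sub c : ll a c -> ll ((a * r) ^+ m.+1) c.
    by rewrite /ll exprS -!mulrA mulrA => ->; rewrite mul0r.
  apply: (amax _ Tu un sub); by rewrite /ll -exprS.
by apply: a0; apply: (proj1 semiprime_elem sp).
Qed.

Lemma singular : semiprime R -> acc_lann R ->
  forall x, essential (fun r => r * x = 0) -> x = 0.
Proof.
move=> sp acc.
pose T x := essential (fun r => r * x = 0).
have TR x r : T x -> T (x * r).
  move=> ex; apply: (ess_super ex) => c e; by rewrite mulrA e mul0r.
have Tn x : T x -> exists n, x ^+ n = 0.
  move=> ex.
  have ch : forall n r, lann (fun y => y = x ^+ n) r -> lann (fun y => y = x ^+ n.+1) r.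
    move=> n r h y ->; by rewrite exprSr mulrA (h _ erefl) mul0r.
  have [N HN] := acc _ ch.
  exists N; apply: NNPP => nz.
  pose K y := exists c, y = c * x ^+ N.
  have lK : left_ideal K.
    split; first split.
    - by exists 0; rewrite mul0r.
    - by move=> _ _ [c1 ->] [c2 ->]; exists (c1 - c2); rewrite mulrBl.
    - by move=> r _ [c ->]; exists (r * c); rewrite mulrA.
  case: (ex K lK) => [|_ [[c ->] e y0]].
    by exists (x ^+ N) => //; exists 1; rewrite mul1r.
  apply: y0; apply: ((HN N.+1 (leqnSn N) c).1) => //.
  by move=> y ->; rewrite exprSr mulrA.
move=> x ex; exact: (nil_lemma sp acc TR Tn ex).
Qed.

End Goldie.


Lemma li_add (R : nzRingType) (I : R -> Prop) : left_ideal I ->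
  forall x y, I x -> I y -> I (x + y).
Proof.
case=> [[I0 IB] _] x y Ix Iy; have := IB x (0 - y) Ix (IB _ _ I0 Iy).
by rewrite sub0r opprK.
Qed.

Lemma li_sum (R : nzRingType) (I : R -> Prop) : left_ideal I ->
  forall n (x : nat -> R), (forall i, (i < n)%N -> I (x i)) -> I (\sum_(i < n) x i).
Proof.
move=> lI n x hx; elim/big_ind: _ => //.
- by case: lI => [[]].
- exact: li_add.
- by move=> i _; apply: hx.
Qed.

Section Transfer.
Variables (B A : nzRingType) (S : B -> Prop) (f : {rmorphism B -> A}).
Hypothesis HS : Defs.multiplicative S.
Hypothesis Sreg : forall s, S s -> regular s.
Hypothesis Hf : is_left_fractions S f.

Let inj0 := f_inj0 Sreg Hf.
Let oreB s x (Ss : S s) := ore Sreg Hf x Ss.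
Let rep := lf_rep Hf.
Let fS := lf_fS Hf.
Let SM := lf_SM HS.
Let S1 := lf_S1 HS.

Lemma ore_A s (r : A) : S s -> exists t d, S t /\ f t * r = f d * f s.
Proof.
move=> Ss; case: (fS Ss) => v [sv vs]; case: (rep (r * v)) => t [d [St e]].
by exists t, d; split=> //; rewrite -e -!mulrA vs mulr1.
Qed.

Lemma T1 : semiprime B -> semiprime A.
Proof.
move=> /semiprime_elem spB; apply/semiprime_elem => x hx.
case: (rep x) => s [b [Ss e]].
have b0 : b = 0.
  apply: spB => c; apply: inj0; rewrite !rmorphM -e.
  have -> : f s * x * f c * (f s * x) = f s * (x * (f c * f s) * x) by rewrite !mulrA.
  by rewrite hx mulr0.
by apply: (inv_cancel0 (fS Ss)); rewrite e b0 rmorph0.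
Qed.

Lemma T2 : finite_left_udim B -> finite_left_udim A.
Proof.
move=> nB [I [lI nzI ind]]; apply: nB.
exists (fun n b => I n (f b)); split.
- move=> n; case: (lI n) => [[I0 IB] IM]; split; first split.
  + by rewrite rmorph0.
  + by move=> x y h1 h2; rewrite rmorphB; apply: IB.
  + by move=> r x h; rewrite rmorphM; apply: IM.
- move=> n; case: (nzI n) => x Ix x0; case: (rep x) => s [b [Ss e]].
  exists b; first by rewrite -e; case: (lI n) => _; apply.
  move=> b0; apply: x0; apply: (inv_cancel0 (fS Ss)); by rewrite e b0 rmorph0.
- move=> n x hx sx i ilt; apply: inj0; apply: (ind n (fun i => f (x i))) => //.
  by rewrite -rmorph_sum sx rmorph0.
Qed.

Lemma T3 : acc_lann A -> acc_lann B.
Proof.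
move=> accA X ch.
pose Y n (a : A) := exists2 x, X n x & a = f x.
have eqv n r : lann (Y n) (f r) <-> lann (X n) r.
  split.
    move=> h x Xx; apply: inj0; rewrite rmorphM; apply: h; by exists x.
  by move=> h _ [x Xx ->]; rewrite -rmorphM h // rmorph0.
have chA : forall n r, lann (Y n) r -> lann (Y n.+1) r.
  move=> n r h; case: (rep r) => s [b [Ss e]].
  have hb : lann (X n) b.
    apply/eqv => _ [x Xx ->]; rewrite -e -mulrA h ?mulr0 //; by exists x.
  have hb' := ch n b hb.
  move=> _ [x Xx ->]; apply: (inv_cancel0 (fS Ss)); rewrite mulrA e.
  apply: (proj2 (eqv n.+1 b) hb'); by exists x.
have [N HN] := accA Y chA; exists N => n nN r.
split=> h.
  by apply/(eqv N); apply/(HN n nN); apply/eqv.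
by apply/(eqv n); apply/(HN n nN); apply/(eqv N).
Qed.

Lemma T4 : finite_left_udim A -> finite_left_udim B.
Proof.
move=> nA [J [lJ nzJ ind]]; apply: nA.
pose I n (a : A) := exists s b, [/\ S s, J n b & f s * a = f b].
have CD : forall n (a : nat -> A), (forall i, (i < n)%N -> I i (a i)) ->
    exists t (c : nat -> B), S t /\ forall i, (i < n)%N -> J i (c i) /\ f t * a i = f (c i).
  elim=> [|n IH] a ha.
    by exists 1, (fun _ => 0); split.
  case: (IH a (fun i hi => ha i (ltnW hi))) => t [c [St hc]].
  case: (ha n (ltnSn n)) => s [b [Ss Jb e]].
  case: (oreB t Ss) => t' [d [St' etd]].
  exists (t' * t), (fun i => if (i < n)%N then t' * c i else d * b); split.
    exact: SM.
  move=> i; rewrite ltnS leq_eqVlt => /orP [/eqP ->|lt].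
    rewrite ltnn; split; first by case: (lJ n) => _; apply.
    by rewrite etd rmorphM -mulrA e rmorphM.
  rewrite lt; case: (hc i lt) => Jc ec; split; first by case: (lJ i) => _; apply.
  by rewrite rmorphM -mulrA ec rmorphM.
exists I; split.
- move=> n; case: (lJ n) => [[J0 JB] JM]; split; first split.
  + by exists 1, 0; split; rewrite ?mulr0 ?rmorph0.
  + move=> a1 a2 [s1 [b1 [S1' J1 e1]]] [s2 [b2 [S2' J2 e2]]].
    case: (oreB s1 S2') => t [d [St ets]].
    exists (t * s1), (t * b1 - d * b2); split.
    * exact: SM.
    * by apply: JB; apply: JM.
    * rewrite mulrBr rmorphB; congr (_ - _).
        by rewrite rmorphM -mulrA e1 rmorphM.
      by rewrite ets rmorphM -mulrA e2 rmorphM.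
  + move=> r a [s [b [Ss Jb e]]]; case: (ore_A r Ss) => t [d [St e']].
    exists t, (d * b); split=> //; first exact: JM.
    by rewrite mulrA e' -mulrA e rmorphM.
- move=> n; case: (nzJ n) => b Jb b0; exists (f b).
    by exists 1, b; split; rewrite ?rmorph1 ?mul1r.
  by move=> fb0; apply: b0; apply: inj0.
- move=> n x hx sx i ilt.
  case: (CD n x hx) => t [c [St hc]].
  have sumc : \sum_(i < n) c i = 0.
    apply: inj0; rewrite rmorph_sum.
    rewrite (eq_bigr (fun i : 'I_n => f t * x i)); last first.
      by move=> j _; rewrite (hc j (ltn_ord j)).2.
    by rewrite -mulr_sumr sx mulr0.
  have c0 := ind n c (fun i hi => (hc i hi).1) sumc i ilt.
  apply: (inv_cancel0 (fS St)); by rewrite (hc i ilt).2 c0 rmorph0.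
Qed.

Lemma T6 : semiprime A -> acc_lann A -> semiprime B.
Proof.
move=> spA accA; apply/semiprime_elem => x hx.
apply: inj0; apply: (proj1 (semiprime_elem A) spA) => a.
case: (rep a) => s [b [Ss e]]; case: (fS Ss) => v [sv vs].
have ea : a = v * f b by rewrite -e mulrA vs mul1r.
pose P (p : A) := forall c, f (x * c) * p = 0.
have key : forall p, P p -> P (v * p).
  pose X k (y : A) := exists c, y = f (x * c) * v ^+ k.
  have ch : forall k r, rann (X k.+1) r -> rann (X k) r.
    move=> k r h _ [c ->].
    have := h (f (x * (c * s)) * v ^+ k.+1) (ex_intro _ (c * s) erefl).
    have -> : f (x * (c * s)) * v ^+ k.+1 = f (x * c) * v ^+ k.
      by rewrite mulrA rmorphM exprS -mulrA (mulrA (f s)) sv mul1r.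
    by [].
  have [k hk] := dcc_rann accA ch.
  have vk j : v ^+ j * f s ^+ j = 1.
    elim: j => [|j IH]; first by rewrite !expr0 mul1r.
    by rewrite exprS exprSr mulrA -(mulrA v) IH mulr1 vs.
  move=> p Pp c.
  have h1 : rann (X k) (f s ^+ k * p).
    move=> _ [c' ->]; rewrite -mulrA (mulrA (v ^+ k)) vk mul1r; exact: Pp.
  have := hk _ h1 (f (x * c) * v ^+ k.+1) (ex_intro _ c erefl).
  by rewrite exprS -!mulrA (mulrA (v ^+ k)) vk mul1r.
have Pfbx : P (f (b * x)).
  move=> c; rewrite -rmorphM.
  have -> : x * c * (b * x) = x * (c * b) * x by rewrite !mulrA.
  by rewrite hx rmorph0.
have := key _ Pfbx 1; rewrite mulr1 => h.
by rewrite ea -!mulrA -rmorphM.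
Qed.


Lemma T5 : semiprime B -> acc_lann B -> finite_left_udim B -> acc_lann A.
Proof.
move=> spB accB udB X ch.
have mono : forall m n r, (m <= n)%N -> lann (X m) r -> lann (X n) r.
  move=> m n r; elim: n => [|n IH].
    by rewrite leqn0 => /eqP ->.
  rewrite leq_eqVlt ltnS => /orP [/eqP -> // | lmn] h.
  by apply: ch; apply: IH.
pose L n b := lann (X n) (f b).
have Lid n : left_ideal (L n).
  split; first split.
  - by move=> x _; rewrite rmorph0 mul0r.
  - by move=> x y h1 h2 z Xz; rewrite rmorphB mulrBl h1 // h2 // subrr.
  - by move=> r x h z Xz; rewrite rmorphM -mulrA h // mulr0.
have L0 n : L n 0 by case: (Lid n) => [[]].
have CL N r : essential (fun c => L N (c * r)) -> L N r.
  move=> ess x Xx; case: (rep (f r * x)) => s [b' [Ss e]].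
  have b0 : b' = 0.
    apply: (singular spB accB).
    apply: (ess_super (@ess_colon B (fun c => L N (c * r)) s _ ess)).
      by rewrite mul0r.
    move=> c h; apply: inj0; rewrite rmorphM -e !mulrA -!rmorphM; exact: h.
  by apply: (inv_cancel0 (fS Ss)); rewrite e b0 rmorph0.
apply: NNPP => nst.
have step : forall N, exists p : nat * (B -> Prop),
    [/\ (N <= p.1)%N, left_ideal p.2, (exists2 y, p.2 y & y <> 0),
        (forall y, p.2 y -> L p.1 y) & (forall y, p.2 y -> L N y -> y = 0)].
  move=> N.
  have [n [le [r [hn hN]]]] :
      exists n, (N <= n)%N /\ exists r, lann (X n) r /\ ~ lann (X N) r.
    apply: NNPP => nn; apply: nst; exists N => n le r; split; last exact: mono.
    move=> h; apply: NNPP => nh; apply: nn; exists n; split=> //; by exists r.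
  case: (rep r) => s [b [Ss e]].
  have Ln : L n b by move=> x Xx; rewrite -e -mulrA hn // mulr0.
  have nLN : ~ L N b.
    move=> h; apply: hN => x Xx; apply: (inv_cancel0 (fS Ss)); rewrite mulrA e.
    exact: h.
  have ness : ~ essential (fun c => L N (c * b)) by move=> h; apply: nLN; apply: CL.
  have [K [[[K0 KB] KM] nzK disj]] : exists K, [/\ left_ideal K, (exists2 k, K k & k <> 0) &
      forall k, K k -> L N (k * b) -> k = 0].
    apply: NNPP => nK; apply: ness => K lK nzK; apply: NNPP => nk; apply: nK.
    exists K; split=> // k Kk Lk; apply: NNPP => k0; apply: nk; by exists k.
  exists (n, fun y => exists2 k, K k & y = k * b); split=> //=.
  - split; first split.
    + by exists 0; rewrite ?mul0r.
    + move=> _ _ [k1 K1 ->] [k2 K2 ->]; exists (k1 - k2); first exact: KB.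
      by rewrite mulrBl.
    + move=> r' _ [k1 K1 ->]; exists (r' * k1); first exact: KM.
      by rewrite mulrA.
  - case: nzK => k Kk k0; exists (k * b); first by exists k.
    move=> kb0; apply: k0; apply: disj => //; rewrite kb0; exact: L0.
  - by move=> _ [k Kk ->]; case: (Lid n) => _; apply.
  - by move=> _ [k Kk ->] h; rewrite (disj k Kk h) mul0r.
pose G N := proj1_sig (constructive_indefinite_description _ (step N)).
have GP N : [/\ (N <= (G N).1)%N, left_ideal (G N).2, (exists2 y, (G N).2 y & y <> 0),
        (forall y, (G N).2 y -> L (G N).1 y) & (forall y, (G N).2 y -> L N y -> y = 0)].
  by rewrite /G; case: (constructive_indefinite_description _ _).
pose sq j := iter j (fun N => (G N).1) 0%N.
pose I j := (G (sq j)).2.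
have sqmono : forall i j, (i <= j)%N -> (sq i <= sq j)%N.
  move=> i j; elim: j => [|j IH].
    by rewrite leqn0 => /eqP ->.
  rewrite leq_eqVlt ltnS => /orP [/eqP -> // | lij].
  apply: leq_trans (IH lij) _; by case: (GP (sq j)).
have IinL i j y : (i < j)%N -> I i y -> L (sq j) y.
  move=> lij Iy; apply: (mono _ _ _ (sqmono i.+1 j lij)).
  by case: (GP (sq i)) => _ _ _ h _; apply: h.
apply: udB; exists I; split.
- by move=> n; case: (GP (sq n)).
- by move=> n; case: (GP (sq n)).
- move=> n x; elim: n => [|n IH] hx sx i ilt //.
  rewrite big_ord_recr /= in sx.
  have Ls : L (sq n) (\sum_(i < n) x i).
    apply: li_sum => // j jn; apply: (IinL j) => //; apply: hx; exact: ltnW.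
  have xn : x n = - \sum_(i < n) x i.
    by apply/eqP; rewrite -addr_eq0 addrC sx.
  have xn0 : x n = 0.
    case: (GP (sq n)) => _ _ _ _ h; apply: h; first by apply: hx.
    rewrite xn -sub0r; case: (Lid (sq n)) => [[_ LB] _]; exact: LB.
  rewrite xn0 addr0 in sx.
  move: ilt; rewrite ltnS leq_eqVlt => /orP [/eqP -> // | lt].
  by apply: IH => // j jn; apply: hx; apply: ltnW.
Qed.

Lemma part_ii : semiprime_left_goldie B <-> semiprime_left_goldie A.
Proof.
split.
  case=> sp [acc ud]; split; first exact: T1.
  by split; [apply: T5 | apply: T2].
case=> sp [acc ud]; split; first exact: T6.
by split; [apply: T3 | apply: T4].
Qed.

End Transfer.


Lemma left_main (B : nzRingType) (S : B -> Prop) :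
     (forall x : B, left_regular x -> regular x) ->
     Defs.multiplicative S ->
     (forall s, S s -> regular s) ->
     forall (A : nzRingType) (f : {rmorphism B -> A}), is_left_fractions S f ->
       [/\ Ql_exists B <-> Ql_exists A,
           (forall (Q1 Q2 : nzRingType) (g1 : {rmorphism B -> Q1})
                   (g2 : {rmorphism A -> Q2}),
              is_Ql g1 -> is_Ql g2 -> ring_isomorphic Q1 Q2)
         & semiprime_left_goldie B <-> semiprime_left_goldie A].
Proof.
move=> LR HS Sreg A f Hf.
have [i1 i2] := part_i HS Sreg Hf LR.
split=> //; exact: part_ii HS Sreg Hf.
Qed.

Definition conv_rm (X Q : nzRingType) (g : {rmorphism X -> Q}) : {rmorphism X^c -> Q^c}.
refine (@mk_rmorph X^c Q^c (fun x : X^c => (g x : Q^c)) _ _ _).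
- by move=> x y; rewrite /= rmorphB.
- by move=> x y; rewrite /= rmorphM.
- by rewrite /= rmorph1.
Defined.

Definition unconv_rm (X Q : nzRingType) (g : {rmorphism X^c -> Q}) : {rmorphism X -> Q^c}.
refine (@mk_rmorph X Q^c (fun x : X => (g x : Q^c)) _ _ _).
- by move=> x y; rewrite /= (rmorphB g x y).
- by move=> x y; exact: (rmorphM g y x).
- by rewrite /= (rmorph1 g).
Defined.

Definition unconv2_rm (X Q : nzRingType) (g : {rmorphism X^c -> Q^c}) : {rmorphism X -> Q}.
refine (@mk_rmorph X Q (fun x : X => (g x : Q)) _ _ _).
- by move=> x y; rewrite /= (rmorphB g x y).
- by move=> x y; exact: (rmorphM g y x).
- by rewrite /= (rmorph1 g).
Defined.

Lemma lf_ext (X Q : nzRingType) (S S' : X -> Prop) (g : {rmorphism X -> Q}) :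
  (forall x, S x <-> S' x) -> is_left_fractions S g -> is_left_fractions S' g.
Proof.
move=> e [h1 h2 h3]; split.
- by move=> s /e; apply: h1.
- by move=> q; case: (h2 q) => s [b [/e Ss E]]; exists s, b.
- move=> b; split.
    by case/h3 => s [/e Ss E]; exists s.
  by case=> s [/e Ss E]; apply/h3; exists s.
Qed.

Section Conv.
Variable X : nzRingType.

Lemma reg_conv (x : X) : regular (x : X^c) <-> regular x.
Proof. by split; case=> l r; split. Qed.

Lemma inv_conv (x : X) : invertible (x : X^c) <-> invertible x.
Proof. by split; case=> y [h1 h2]; exists y; split. Qed.

Lemma rf_conv (Q : nzRingType) (S : X -> Prop) (g : {rmorphism X -> Q}) :
  is_right_fractions S g -> is_left_fractions (S : X^c -> Prop) (conv_rm g).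
Proof.
case=> h1 h2 h3; split.
- by move=> s Ss; case: (h1 s Ss) => y [a b]; exists y; split; [exact: b | exact: a].
- by move=> q; case: (h2 q) => s [b [Ss E]]; exists s, b.
- move=> b; split.
    by case/h3 => s [Ss E]; exists s.
  by case=> s [Ss E]; apply/h3; exists s.
Qed.

Lemma lf_unconv (Q : nzRingType) (S : X -> Prop) (g : {rmorphism X^c -> Q}) :
  is_left_fractions (S : X^c -> Prop) g -> is_right_fractions S (unconv_rm g).
Proof.
case=> h1 h2 h3; split.
- by move=> s Ss; case: (h1 s Ss) => y [a b]; exists y; split; [exact: b | exact: a].
- by move=> q; case: (h2 q) => s [b [Ss E]]; exists s, b.
- move=> b; split.
    by case/h3 => s [Ss E]; exists s.
  by case=> s [Ss E]; apply/h3; exists s.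
Qed.

Lemma Qr_conv : Qr_exists X <-> Ql_exists X^c.
Proof.
split.
  case=> Q [g Hg]; exists Q^c, (conv_rm g).
  apply: (@lf_ext X^c Q^c (fun x : X^c => @regular X x) (@regular X^c) (conv_rm g)).
    move=> x; exact: iff_sym (reg_conv x).
  exact: rf_conv Hg.
case=> Q [g Hg]; exists Q^c, (unconv_rm g).
apply: lf_unconv.
apply: (@lf_ext X^c Q (@regular X^c) (fun x : X^c => @regular X x) g) => //.
move=> x; exact: (reg_conv x).
Qed.

Lemma semiprime_conv : semiprime X <-> semiprime X^c.
Proof.
split=> sp I [[I0 IB] IM] I2 x Ix.
  apply: (sp I) => //.
    split=> // r y Iy; by case: (IM r y Iy).
  by move=> y z Iy Iz; apply: (I2 z y).
apply: (sp I) => //.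
  split=> // r y Iy; by case: (IM r y Iy).
by move=> y z Iy Iz; apply: (I2 z y).
Qed.

Lemma goldie_conv : semiprime_right_goldie X <-> semiprime_left_goldie X^c.
Proof.
split; case=> sp g; (split; [by apply/semiprime_conv | exact: g]).
Qed.

End Conv.

Lemma Qr_Qlc (X Q : nzRingType) (g : {rmorphism X -> Q}) : is_Qr g -> is_Ql (conv_rm g).
Proof.
move=> Hg.
apply: (@lf_ext X^c Q^c (fun x : X^c => @regular X x) (@regular X^c) (conv_rm g)).
  move=> x; exact: iff_sym (@reg_conv X x).
exact: rf_conv Hg.
Qed.

Lemma right_main (B : nzRingType) (S : B -> Prop) :
     (forall x : B, right_regular x -> regular x) ->
     Defs.multiplicative S ->
     (forall s, S s -> regular s) ->
     forall (A : nzRingType) (f : {rmorphism B -> A}), is_right_fractions S f ->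
       [/\ Qr_exists B <-> Qr_exists A,
           (forall (Q1 Q2 : nzRingType) (g1 : {rmorphism B -> Q1})
                   (g2 : {rmorphism A -> Q2}),
              is_Qr g1 -> is_Qr g2 -> ring_isomorphic Q1 Q2)
         & semiprime_right_goldie B <-> semiprime_right_goldie A].
Proof.
move=> LRr HS Sreg A f Hf.
have LRc : forall x : B^c, left_regular x -> regular x.
  by move=> x h; apply/reg_conv; exact: LRr x h.
have HSc : Defs.multiplicative (S : B^c -> Prop).
  by case: HS => a b c; split=> // x y Sx Sy; exact: c y x Sy Sx.
have Sregc : forall s : B^c, S s -> regular s.
  by move=> s Ss; apply/reg_conv; exact: Sreg.
have [e1 e2 e3] := left_main LRc HSc Sregc (rf_conv Hf).
split.
- split.
    by move/(Qr_conv B)/e1/(Qr_conv A).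
  by move/(Qr_conv A)/e1/(Qr_conv B).
- move=> Q1 Q2 g1 g2 H1 H2.
  have [h [k hk kh]] := e2 _ _ _ _ (Qr_Qlc H1) (Qr_Qlc H2).
  by exists (unconv2_rm h); exists k => x; [exact: hk | exact: kh].
- split.
    by move/(goldie_conv B)/e3/(goldie_conv A).
  by move/(goldie_conv A)/e3/(goldie_conv B).
Qed.

End Helpers.
Import Helpers.

Theorem proposition4p6 :
  (* left version *)
  (forall (B : nzRingType) (S : B -> Prop),
     (forall x : B, left_regular x -> regular x) ->
     multiplicative S ->
     (forall s, S s -> regular s) ->
     (exists (A : nzRingType) (f : {rmorphism B -> A}), is_left_fractions S f) ->
     forall (A : nzRingType) (f : {rmorphism B -> A}), is_left_fractions S f ->
       [/\ Ql_exists B <-> Ql_exists A,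
           (forall (Q1 Q2 : nzRingType) (g1 : {rmorphism B -> Q1})
                   (g2 : {rmorphism A -> Q2}),
              is_Ql g1 -> is_Ql g2 -> ring_isomorphic Q1 Q2)
         & semiprime_left_goldie B <-> semiprime_left_goldie A]) /\
  (* right version *)
  (forall (B : nzRingType) (S : B -> Prop),
     (forall x : B, right_regular x -> regular x) ->
     multiplicative S ->
     (forall s, S s -> regular s) ->
     (exists (A : nzRingType) (f : {rmorphism B -> A}), is_right_fractions S f) ->
     forall (A : nzRingType) (f : {rmorphism B -> A}), is_right_fractions S f ->
       [/\ Qr_exists B <-> Qr_exists A,
           (forall (Q1 Q2 : nzRingType) (g1 : {rmorphism B -> Q1})
                   (g2 : {rmorphism A -> Q2}),
              is_Qr g1 -> is_Qr g2 -> ring_isomorphic Q1 Q2)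
         & semiprime_right_goldie B <-> semiprime_right_goldie A]).
Proof.
split.
  move=> B S LR HS Sreg _ A f Hf; exact (left_main LR HS Sreg Hf).
move=> B S LR HS Sreg _ A f Hf; exact (right_main LR HS Sreg Hf).
Qed.
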